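(* Let $\mathbf{C}$ be a locally small category, $\Omega$ an object, $\Phi\colon\mathbf{C}^{\mathrm{op}}\to\mathbf{Pos}$ a functor whose fibres have all meets preserved by reindexing $f^*=\Phi f$, and $d_\Omega\in\Phi\Omega$. Let $\alpha_Y(S)=\bigwedge_{k\in S}k^*(d_\Omega)$, $\gamma_Y(d)=\{k\in\mathbf{C}(Y,\Omega)\mid d\preceq k^*(d_\Omega)\}$, $\mathrm{cl}_Y=\gamma_Y\circ\alpha_Y$. Let $F\colon\mathbf{C}\to\mathbf{C}$ be a functor, $(\mathit{ev}_\lambda\colon F\Omega\to\Omega)_{\lambda\in\Lambda}$ morphisms, $\Lambda_Y(S)=\{\mathit{ev}_\lambda\circ Fh\mid\lambda\in\Lambda,h\in S\}$, and $\mathcal{K}_X=\alpha_{FX}\circ\Lambda_X\circ\gamma_X$. Fix an object $X$ and a closure operator $\mathrm{cl}'_X$ on $(\mathcal{P}(\mathbf{C}(X,\Omega)),\subseteq)$ that is a subclosure of $\mathrm{cl}_X$ ($\mathrm{cl}'_X\subseteq\mathrm{cl}_X$ pointwise) and is compatible ($\Lambda_X\circ\mathrm{cl}'_X\circ\mathrm{cl}_X\subseteq\mathrm{cl}_{FX}\circ\Lambda_X\circ\mathrm{cl}'_X$ pointwise). For a set $\Theta_X\subseteq\mathbf{C}(X,\Omega)$ and a coalgebra $c\colon X\to FX$ define the logic function $\mathrm{lo}_X(S)=\mathcal{P}(c^\bullet)(\Lambda_X(\mathrm{cl}'_X(S)))\cup\Theta_X$ and the behaviour function $\mathrm{be}_X(d)=c^*(\mathcal{K}_X(d))\wedge\alpha_X(\Theta_X)$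 on $\Phi X$. Then $\alpha_X\circ\mathrm{lo}_X\circ\gamma_X=\mathrm{be}_X$.
   Context: A closure operator is a monotone, idempotent, extensive map. $c^\bullet\colon\mathbf{C}(FX,\Omega)\to\mathbf{C}(X,\Omega)$ is precomposition with $c$, $\mathcal{P}(c^\bullet)$ its direct image, and $c^*=\Phi c\colon\Phi(FX)\to\Phi X$. *)

(* Defs.v *)
Set Implicit Arguments.
Unset Strict Implicit.

Definition subset {T : Type} (A B : T -> Prop) : Prop := forall x, A x -> B x.

Record Cat := {
  Obj :> Type;
  Hom : Obj -> Obj -> Type;
  idm : forall X, Hom X X;
  comp : forall X Y Z, Hom Y Z -> Hom X Y -> Hom X Z;
  comp_id_l : forall X Y (f : Hom X Y), comp (idm Y) f = f;
  comp_id_r : forall X Y (f : Hom X Y), comp f (idm X) = f;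
  comp_assoc : forall X Y Z W (h : Hom Z W) (g : Hom Y Z) (f : Hom X Y),
      comp h (comp g f) = comp (comp h g) f
}.
Arguments Hom {c} _ _.
Arguments idm {c} _.
Arguments comp {c X Y Z} _ _.

Record Endo (C : Cat) := {
  Fo : C -> C;
  Fm : forall X Y, @Hom C X Y -> @Hom C (Fo X) (Fo Y);
  Fm_id : forall X, Fm (@idm C X) = @idm C (Fo X);
  Fm_comp : forall X Y Z (g : @Hom C Y Z) (f : @Hom C X Y),
      Fm (comp g f) = comp (Fm g) (Fm f)
}.

(* A functor Phi : C^op -> Pos whose fibres have all meets (given by [meet]),
   preserved by the reindexing maps f^* = reix f. *)
Record PosFib (C : Cat) := {
  fib : C -> Type;
  le : forall X, fib X -> fib X -> Prop;
  le_refl : forall X (a : fib X), le a a;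
  le_trans : forall X (a b c : fib X), le a b -> le b c -> le a c;
  le_antisym : forall X (a b : fib X), le a b -> le b a -> a = b;
  reix : forall X Y, @Hom C X Y -> fib Y -> fib X;
  reix_mono : forall X Y (f : @Hom C X Y) (a b : fib Y), le a b -> le (reix f a) (reix f b);
  reix_id : forall X (a : fib X), reix (@idm C X) a = a;
  reix_comp : forall X Y Z (g : @Hom C Y Z) (f : @Hom C X Y) (a : fib Z),
      reix (comp g f) a = reix f (reix g a);
  meet : forall X, (fib X -> Prop) -> fib X;
  meet_lb : forall X (S : fib X -> Prop) a, S a -> le (meet S) a;
  meet_glb : forall X (S : fib X -> Prop) b, (forall a, S a -> le b a) -> le b (meet S);
  reix_meet : forall X Y (f : @Hom C X Y) (S : fib Y -> Prop),
      reix f (meet S) = meet (fun b => exists a, S a /\ b = reix f a)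
}.

Section Ops.
Variables (C : Cat) (Phi : PosFib C) (Om : C) (dOm : fib Phi Om).

Definition meet2 X (a b : fib Phi X) : fib Phi X :=
  meet (fun x => x = a \/ x = b).

Definition alpha Y (S : @Hom C Y Om -> Prop) : fib Phi Y :=
  meet (fun a => exists k, S k /\ a = reix k dOm).

Definition gamma Y (d : fib Phi Y) : @Hom C Y Om -> Prop :=
  fun k => le d (reix k dOm).

Definition cl Y (S : @Hom C Y Om -> Prop) : @Hom C Y Om -> Prop :=
  gamma (alpha S).

Variables (F : Endo C) (L : Type) (ev : L -> @Hom C (Fo F Om) Om).

Definition LamOp Y (S : @Hom C Y Om -> Prop) : @Hom C (Fo F Y) Om -> Prop :=
  fun g => exists l h, S h /\ g = comp (ev l) (Fm F h).

Definition Kop X (d : fib Phi X) : fib Phi (Fo F X) :=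
  alpha (LamOp (gamma d)).

End Ops.

Definition closure_op {T : Type} (c : (T -> Prop) -> (T -> Prop)) : Prop :=
  (forall S S', subset S S' -> subset (c S) (c S')) /\
  (forall S, subset S (c S)) /\
  (forall S, subset (c (c S)) (c S) /\ subset (c S) (c (c S))).

(* direct image P(c^bullet)(T) = { k o c | k in T } *)
Definition pre_img (C : Cat) (Om X : C) (F : Endo C) (c : @Hom C X (Fo F X))
  (T : @Hom C (Fo F X) Om -> Prop) : @Hom C X Om -> Prop :=
  fun g => exists k, T k /\ g = comp k c.

(* Main.v *)
Require Import Defs.

Theorem theorem3 (C : Cat) (Phi : PosFib C) (Om : C) (dOm : fib Phi Om)
  (F : Endo C) (L : Type) (ev : L -> @Hom C (Fo F Om) Om)
  (X : C) (cl' : (@Hom C X Om -> Prop) -> (@Hom C X Om -> Prop))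
  (Hclos : closure_op cl')
  (Hsub : forall S, subset (cl' S) (cl dOm S))
  (Hcompat : forall S,
      subset (LamOp ev (cl' (cl dOm S)))
             (cl dOm (LamOp ev (cl' S))))
  (Theta : @Hom C X Om -> Prop) (c : @Hom C X (Fo F X)) :
  let lo := fun S : @Hom C X Om -> Prop =>
    fun g => pre_img c (LamOp ev (cl' S)) g \/ Theta g in
  let be := fun d : fib Phi X =>
    meet2 (reix c (Kop dOm ev d)) (alpha dOm Theta) in
  forall d : fib Phi X, alpha dOm (lo (gamma dOm d)) = be d.
Proof.
  intros lo be d.
  destruct Hclos as [Hmono [Hext Hidem]].
  assert (Hin : forall h, cl' (gamma dOm d) h -> gamma dOm d h).
  { intros h Hh. apply Hsub in Hh. unfold cl, gamma, alpha in *.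
    eapply le_trans; [|exact Hh]. apply meet_glb.
    intros a [k [Hk ->]]. exact Hk. }
  apply le_antisym.
  - unfold be, meet2. apply meet_glb. intros a [-> | ->].
    + unfold Kop, alpha. rewrite reix_meet. apply meet_glb.
      intros b [a' [[k [Hk ->]] ->]].
      rewrite <- reix_comp. apply meet_lb. exists (comp k c). split; [|reflexivity].
      left. exists k. split; [|reflexivity].
      destruct Hk as [l [h [Hh ->]]]. exists l, h. split; [apply Hext; exact Hh|reflexivity].
    + unfold alpha. apply meet_glb. intros a [k [Hk ->]].
      apply meet_lb. exists k. split; [right; exact Hk|reflexivity].
  - unfold be, meet2, alpha at 1. apply meet_glb. intros a [k [Hk ->]].
    unfold be, meet2. destruct Hk as [[k' [Hk' ->]] | Ht].
    + eapply le_trans. apply meet_lb. left. reflexivity.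
      rewrite reix_comp. apply reix_mono. unfold Kop, alpha. apply meet_lb.
      exists k'. split; [|reflexivity].
      destruct Hk' as [l [h [Hh ->]]]. exists l, h. split; [apply Hin; exact Hh|reflexivity].
    + eapply le_trans. apply meet_lb. right. reflexivity.
      unfold alpha. apply meet_lb. exists k. split; [exact Ht|reflexivity].
Qed.
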